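(* Let $R=\mathbb{C}[u]/(u^2)$ and let $\mathcal{A}=(A_1,\dots,A_4)$ be a quadruple of $5\times5$ alternating matrices with entries $a^{(k)}_{ij}\in R$. Suppose the closed subscheme of $\mathbb{P}^3_R$ cut out by the five $4\times4$ principal sub-Pfaffians of $\mathcal{A}(\mathbf{x})=\sum_kA_kx_k$ has Zariski tangent space of dimension at least $2$ at a point $p$ (lying over $u=0$). Then there exists $\gamma\in U_4(\mathbb{C})\times U_5(\mathbb{C})$ such that either $\gamma(\mathcal{A})$ is in normal form of type $(K)$ for some $1\le K\le4$, or $\gamma(\mathcal{A})$ is in normal form of type $(I,J,K)$ for some $1\le I<J\le5$, $1\le K\le4$.
   Context: $U_n\subset\mathrm{GL}_n$ is the subgroup of lower triangular unipotent matrices, acting on quadruples by $A_k\mapsto\sum_l(g_4)_{kl}A_l$ and $A_k\mapsto g_5A_kg_5^t$. For $a\in R$, $a\equiv0\pmod u$ means $a\in uR$ and $a\equiv0\pmod{u^2}$ means $a=0$. A quadruple is in normal form of type $(K)$ if every entry of $A_K$ is $\equiv0\pmod u$. It is in normal form of type $(I,J,K)$ ($1\le I<J\le5$, $1\le K\le4$) if $a^{(k)}_{IJ}\equiv0\pmod u$ for all $k$; $a^{(K)}_{Ij}\equiv0\pmod u$ for all $j$; $a^{(K)}_{iJ}\equiv0\pmod u$ for all $i$; and $a^{(K)}_{IJ}\equiv0\pmod{u^2}$. *)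

(* Defs.v *)
(* The complex numbers are modelled as R[i] (the
   real-closed library's algebraic closure 'complex R') for an arbitrary
   R : realType; every realType is (isomorphic to) the field of real numbers,
   so R[i] is (isomorphic to) the complex field C. *)
From HB Require Import structures.
From mathcomp Require Import all_boot all_algebra.
From mathcomp Require Import reals.
From mathcomp.real_closed Require Import complex.
Set Implicit Arguments. Unset Strict Implicit. Unset Printing Implicit Defensive.
Import GRing.Theory Num.Theory.
Local Open Scope ring_scope.

(* Elements of R = C[u]/(u^2) are written a = a0 + u a1 with a0, a1 in C.   *)
(* A quadruple A = (A_1,..,A_4) of 5x5 matrices over R is thus given by two *)
(* quadruples of complex matrices A0, A1 : 'I_4 -> 'M_5 with                *)
(*   A_k = A0 k + u * A1 k.                                                 *)
(* Indices are 0-based: 'I_4 = {0,..,3} stands for {1,..,4}, etc.           *)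

Definition quad (F : Type) := 'I_4 -> 'M[F]_5.

Definition alternating (F : ringType) (n : nat) (M : 'M[F]_n) : Prop :=
  (forall i j, M i j = - M j i) /\ (forall i, M i i = 0).

(* A_k alternating over R  <=>  both components alternating over C *)
Definition alternating_quad (F : ringType) (A0 A1 : quad F) : Prop :=
  forall k, alternating (A0 k) /\ alternating (A1 k).

Definition o4 (n : nat) (h : (n < 4)%N) : 'I_4 := Ordinal h.
Definition subpf (S : comRingType) (M : 'M[S]_5) (i : 'I_5) : S :=
  let a := lift i (o4 (isT : (0 < 4)%N)) in
  let b := lift i (o4 (isT : (1 < 4)%N)) in
  let c := lift i (o4 (isT : (2 < 4)%N)) in
  let d := lift i (o4 (isT : (3 < 4)%N)) in
  M a b * M c d - M a c * M b d + M a d * M b c.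

(* Zariski tangent space.  Let X in P^3_R be cut out by the five Pfaffians  *)
(* subpf (sum_k x_k A_k) i.  A point p of X lying over u = 0 (a closed point *)
(* with residue field C) is given by homogeneous coordinates p : 'I_4 -> C, *)
(* p <> 0.  The Zariski tangent space T_p X = (m_p/m_p^2)^* is identified   *)
(* with the C-algebra maps O_{X,p} -> C[e]/(e^2) lifting p, i.e. with the   *)
(* C[e]-points of X over p.  Such a point is given by u |-> c e (c in C)    *)
(* and homogeneous coordinates x = p + e v (v in C^4), subject to           *)
(*    Pf_i( sum_k (A0 k + c e A1 k) (p_k + e v_k) ) = 0  in C[e]/(e^2),     *)
(* and (c, v), (c, v + t p) give the same point.  Hence                     *)
(*    T_p X = { (c,v) satisfying the equations } / C (0, p).                *)
(* We model C[e] as {poly C} with e = 'X and reduce modulo 'X^2.            *)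

Definition pencil_eps (C : fieldType) (A0 A1 : quad C) (p : 'I_4 -> C)
    (c : C) (v : 'I_4 -> C) : 'M[{poly C}]_5 :=
  \matrix_(i, j) \sum_(k < 4)
     ((A0 k i j)%:P + c *: 'X * (A1 k i j)%:P) * ((p k)%:P + v k *: 'X).

Definition tangent_vec (C : fieldType) (A0 A1 : quad C) (p : 'I_4 -> C)
    (c : C) (v : 'I_4 -> C) : Prop :=
  forall i : 'I_5, ('X^2 %| subpf (pencil_eps A0 A1 p c v) i)%R.

(* p is a (closed, C-valued) point of X:  Pf_i(sum_k A_k p_k) = 0 mod u *)
Definition on_special_fiber (C : fieldType) (A0 : quad C) (p : 'I_4 -> C)
    : Prop :=
  (exists k, p k != 0) /\
  forall i : 'I_5, subpf (\sum_(k < 4) p k *: A0 k) i = 0.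

(* dim_C T_p X >= 2 : there are two tangent vectors whose classes modulo
   the trivial direction (0, p) are linearly independent, i.e. (0,p), w1, w2
   are linearly independent in C x C^4. *)
Definition tangent_dim_ge2 (C : fieldType) (A0 A1 : quad C) (p : 'I_4 -> C)
    : Prop :=
  exists (c1 c2 : C) (v1 v2 : 'I_4 -> C),
    tangent_vec A0 A1 p c1 v1 /\ tangent_vec A0 A1 p c2 v2 /\
    forall a b d : C,
      a * 0 + b * c1 + d * c2 = 0 ->
      (forall k, a * p k + b * v1 k + d * v2 k = 0) ->
      [/\ a = 0, b = 0 & d = 0].

Definition lower_unipotent (C : ringType) (n : nat) (g : 'M[C]_n) : Prop :=
  (forall i j : 'I_n, (i < j)%N -> g i j = 0) /\ (forall i, g i i = 1).

(* gamma = (g4, g5):  A_k |-> g5 (sum_l (g4)_{kl} A_l) g5^T, applied to both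
   components (the action is C-linear, so it commutes with A = A0 + u A1). *)
Definition act (C : ringType) (g4 : 'M[C]_4) (g5 : 'M[C]_5) (A : quad C)
    : quad C :=
  fun k => g5 *m (\sum_(l < 4) g4 k l *: A l) *m g5^T.

(*   a = a0 + u a1 ;  a == 0 mod u  <=> a0 = 0 ;  a == 0 mod u^2 <=> a = 0. *)

Definition normal_form_K (C : ringType) (A0 A1 : quad C) (K : 'I_4) : Prop :=
  forall i j, A0 K i j = 0.

Definition normal_form_IJK (C : ringType) (A0 A1 : quad C)
    (I J : 'I_5) (K : 'I_4) : Prop :=
  [/\ forall k, A0 k I J = 0,
      forall j, A0 K I j = 0,
      forall i, A0 K i J = 0
    & A0 K I J = 0 /\ A1 K I J = 0].

(* Main.v *)
Require Import Defs.
From HB Require Import structures.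
From mathcomp Require Import all_boot all_algebra.
From mathcomp Require Import reals.
From mathcomp.real_closed Require Import complex.
From mathcomp Require Import ring zify.
Set Implicit Arguments. Unset Strict Implicit. Unset Printing Implicit Defensive.
Import GRing.Theory Num.Theory.
Local Open Scope ring_scope.
Section Pf.
Variable F : comRingType.

Definition Dn (m n : nat -> nat -> F) (a b c d : nat) : F :=
  (m a b * n c d - m a c * n b d + m a d * n b c) +
  (n a b * m c d - n a c * m b d + n a d * m b c).

Lemma sgn_close (x y : F) : (x = y \/ x = - y) -> y = 0 -> x = 0.
Proof. by move=> [->|->] ->; rewrite ?oppr0. Qed.

Lemma Dn_zero (m n : nat -> nat -> F) :
  (forall i j, (i < 5)%N -> (j < 5)%N -> m i j = - m j i) ->
  (forall i j, (i < 5)%N -> (j < 5)%N -> n i j = - n j i) ->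
  (forall i, (i < 5)%N -> Dn m n (bump i 0) (bump i 1) (bump i 2) (bump i 3) = 0) ->
  forall a b c d, (a < 5)%N -> (b < 5)%N -> (c < 5)%N -> (d < 5)%N ->
  [&& a != b, a != c, a != d, b != c, b != d & c != d] ->
  Dn m n a b c d = 0.
Proof.
move=> am an H a b c d Ha Hb Hc Hd Hdis.
have Hm := H (10 - (a + b + c + d))%N.
move: Hm Hdis.
case: a Ha => [|[|[|[|[|a]]]]] // _;
case: b Hb => [|[|[|[|[|b]]]]] // _;
case: c Hc => [|[|[|[|[|c]]]]] // _;
case: d Hd => [|[|[|[|[|d]]]]] // _ /= => /(_ isT) Hm _;
apply: (sgn_close _ Hm); rewrite /Dn;
rewrite ?(am 1 0 isT isT) ?(am 2 0 isT isT) ?(am 3 0 isT isT) ?(am 4 0 isT isT)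
  ?(am 2 1 isT isT) ?(am 3 1 isT isT) ?(am 4 1 isT isT) ?(am 3 2 isT isT)
  ?(am 4 2 isT isT) ?(am 4 3 isT isT);
rewrite ?(an 1 0 isT isT) ?(an 2 0 isT isT) ?(an 3 0 isT isT) ?(an 4 0 isT isT)
  ?(an 2 1 isT isT) ?(an 3 1 isT isT) ?(an 4 1 isT isT) ?(an 3 2 isT isT)
  ?(an 4 2 isT isT) ?(an 4 3 isT isT);
first [left; ring | right; ring].
Qed.
End Pf.

Section Jet.
Variable F : fieldType.
Definition jet (q : {poly F}) (a b : F) :=
  exists r, q = a%:P + 'X * b%:P + 'X^2 * r.

Lemma jet_eq q a b a' b' : jet q a b -> a = a' -> b = b' -> jet q a' b'.
Proof. by move=> ? <- <-. Qed.

Lemma jetD q1 a1 b1 q2 a2 b2 : jet q1 a1 b1 -> jet q2 a2 b2 ->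
  jet (q1 + q2) (a1 + a2) (b1 + b2).
Proof. move=> [r1 ->] [r2 ->]; exists (r1 + r2); rewrite !rmorphD; ring. Qed.

Lemma jetB q1 a1 b1 q2 a2 b2 : jet q1 a1 b1 -> jet q2 a2 b2 ->
  jet (q1 - q2) (a1 - a2) (b1 - b2).
Proof. move=> [r1 ->] [r2 ->]; exists (r1 - r2); rewrite !rmorphB; ring. Qed.

Lemma jetM q1 a1 b1 q2 a2 b2 : jet q1 a1 b1 -> jet q2 a2 b2 ->
  jet (q1 * q2) (a1 * a2) (a1 * b2 + b1 * a2).
Proof.
move=> [r1 ->] [r2 ->].
exists (a1%:P * r2 + b1%:P * b2%:P + r1 * a2%:P + 'X * (b1%:P * r2 + r1 * b2%:P)
   + 'X^2 * r1 * r2).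
rewrite !rmorphD !rmorphM; ring.
Qed.

Lemma jet_dvd q a b : jet q a b -> ('X^2 %| q)%R -> a = 0 /\ b = 0.
Proof.
move=> [r ->] Hd.
have H2 : ('X^2 %| a%:P + 'X * b%:P)%R.
  by rewrite (dvdp_addl _ (dvdp_mulIl _ _)) in Hd.
have H0 : a%:P + 'X * b%:P = 0 :> {poly F}.
  apply/eqP; apply: contraT => Hn.
  have := dvdp_leq Hn H2; rewrite size_polyXn.
  have : (size (a%:P + 'X * b%:P)%R <= 2)%N.
    apply: (leq_trans (size_polyD _ _)).
    rewrite geq_max size_polyC (leq_trans (leq_b1 _)) //=.
    apply: (leq_trans (size_polyMleq _ _)).
    by rewrite size_polyX size_polyC; case: (b != 0).
  by move=> h1 h2; have := leq_trans h2 h1.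
have := congr1 (fun q : {poly F} => q`_0) H0; have := congr1 (fun q : {poly F} => q`_1) H0.
rewrite !coefD !coefC !coefXM !coefC /=.
by move=> h1 h2; split; [rewrite -h2 addr0 | rewrite -h1 add0r].
Qed.
End Jet.

Section Tan.
Variable F : fieldType.

Definition DO (X Y : 'M[F]_5) (a b c d : 'I_5) : F :=
  (X a b * Y c d - X a c * Y b d + X a d * Y b c) +
  (Y a b * X c d - Y a c * X b d + Y a d * X b c).

Definition Dsub (X Y : 'M[F]_5) (i : 'I_5) : F :=
  DO X Y (lift i (o4 (isT : (0 < 4)%N))) (lift i (o4 (isT : (1 < 4)%N)))
         (lift i (o4 (isT : (2 < 4)%N))) (lift i (o4 (isT : (3 < 4)%N))).

Lemma subpf_jet (E : 'M[{poly F}]_5) (X Y : 'M[F]_5) i :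
  (forall i j, jet (E i j) (X i j) (Y i j)) ->
  jet (subpf E i) (subpf X i) (Dsub X Y i).
Proof.
move=> HE; rewrite /subpf /Dsub /DO.
set a := lift i _; set b := lift i _; set c := lift i _; set d := lift i _.
apply: jet_eq; first by apply: jetD; [apply: jetB|]; apply: jetM.
  by [].
ring.
Qed.

Variables (A0 A1 : quad F) (p : 'I_4 -> F).
Definition M0 : 'M[F]_5 := \sum_k p k *: A0 k.
Definition M1 : 'M[F]_5 := \sum_k p k *: A1 k.
Definition Nt (c : F) (v : 'I_4 -> F) : 'M[F]_5 := c *: M1 + \sum_k v k *: A0 k.

Lemma pencil_jet c v i j :
  jet (pencil_eps A0 A1 p c v i j) (M0 i j) (Nt c v i j).
Proof.
rewrite /pencil_eps /M0 /Nt /M1 !mxE !summxE.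
exists (\sum_k (c * A1 k i j * v k)%:P).
transitivity (\sum_(k < 4) ((p k * A0 k i j)%:P + 'X * (c * (p k * A1 k i j) + v k * A0 k i j)%:P + 'X^2 * (c * A1 k i j * v k)%:P)).
  by apply: eq_bigr => k _; rewrite -!mul_polyC !rmorphD !rmorphM; ring.
rewrite !big_split /= -!mulr_sumr -!rmorph_sum big_split /= -mulr_sumr.
by congr (_%:P + 'X * (c * _ + _)%:P + _); apply: eq_bigr => k _; rewrite mxE.
Qed.

Lemma tangent_Dsub c v :
  (forall i, subpf M0 i = 0) -> tangent_vec A0 A1 p c v ->
  forall i, Dsub M0 (Nt c v) i = 0.
Proof.
move=> _ Ht i.
have := jet_dvd (subpf_jet i (@pencil_jet c v)) (Ht i).
by case.
Qed.
End Tan.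

Section Ker.
Variable F : numFieldType.

Definition mn (X : 'M[F]_5) := fun i j : nat => X (inord i) (inord j).
Lemma EM (X : 'M[F]_5) (i j : 'I_5) : X i j = mn X i j.
Proof. by rewrite /mn !inord_val. Qed.

Lemma DO_mn X Y a b c d : DO X Y a b c d = Dn (mn X) (mn Y) a b c d.
Proof. by rewrite /DO /Dn !EM. Qed.

Lemma Dsub_Dn X Y (i : 'I_5) :
  Dsub X Y i = Dn (mn X) (mn Y) (bump i 0) (bump i 1) (bump i 2) (bump i 3).
Proof. by rewrite /Dsub DO_mn. Qed.

Lemma DO_zero (X Y : 'M[F]_5) : alternating X -> alternating Y ->
  (forall i, Dsub X Y i = 0) ->
  forall a b c d : 'I_5,
  [&& a != b, a != c, a != d, b != c, b != d & c != d] ->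
  DO X Y a b c d = 0.
Proof.
move=> [aX _] [aY _] H a b c d Hd; rewrite DO_mn; apply: Dn_zero => //.
- by move=> i j _ _; rewrite /mn aX.
- by move=> i j _ _; rewrite /mn aY.
- by move=> i Hi; rewrite -(H (Ordinal Hi)) Dsub_Dn.
Qed.

Definition P4 (X : 'M[F]_5) (a b c d : 'I_5) : F :=
  X a b * X c d - X a c * X b d + X a d * X b c.

Lemma two_eq0 (y : F) : y + y = 0 -> y = 0.
Proof.
by move=> /eqP; rewrite -mulr2n -mulr_natr mulf_eq0 pnatr_eq0 orbF => /eqP.
Qed.

Lemma P4_zero (X : 'M[F]_5) : alternating X ->
  (forall i, subpf X i = 0) ->
  forall a b c d : 'I_5,
  [&& a != b, a != c, a != d, b != c, b != d & c != d] ->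
  P4 X a b c d = 0.
Proof.
move=> aX H a b c d Hd; apply: two_eq0.
rewrite -(DO_zero aX aX _ Hd); first by rewrite /DO /P4; ring.
move=> i; transitivity (subpf X i + subpf X i); last by rewrite H addr0.
rewrite /Dsub /DO /subpf; ring.
Qed.

Definition cmp (a b k : nat) : nat :=
  nth 0%N [seq x <- iota 0 5 | (x != a) && (x != b)] k.

Lemma cmp_ok (a b : nat) : (a < 5)%N -> (b < 5)%N -> a != b ->
  [&& (cmp a b 0 < 5)%N, (cmp a b 1 < 5)%N, (cmp a b 2 < 5)%N,
      cmp a b 0 != a, cmp a b 0 != b, cmp a b 1 != a, cmp a b 1 != b,
      cmp a b 2 != a, cmp a b 2 != b & 
      [&& cmp a b 0 != cmp a b 1, cmp a b 0 != cmp a b 2 & cmp a b 1 != cmp a b 2]].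
Proof.
by case: a => [|[|[|[|[|a]]]]] //; case: b => [|[|[|[|[|b]]]]].
Qed.

Lemma compl3 (a b : 'I_5) : a != b ->
  exists c d e : 'I_5,
  [&& c != a, c != b, d != a, d != b, e != a, e != b & 
      [&& c != d, c != e & d != e]].
Proof.
move=> Hab.
have := cmp_ok (ltn_ord a) (ltn_ord b) Hab.
move=> /andP[h0 /andP[h1 /andP[h2 /andP[c0a /andP[c0b /andP[c1a /andP[c1b /andP[c2a /andP[c2b /and3P[c01 c02 c12]]]]]]]]]].
exists (Ordinal h0), (Ordinal h1), (Ordinal h2).
by rewrite -!(inj_eq val_inj) /= c0a c0b c1a c1b c2a c2b c01 c02 c12.
Qed.
End Ker.

Section Bil.
Variable F : numFieldType.
Local Notation vec := 'rV[F]_5.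

Definition bil (x : vec) (N : 'M[F]_5) (y : vec) : F := (x *m N *m y^T) 0 0.
Definition ev (i : 'I_5) : vec := delta_mx 0 i.
Definition inker (X : 'M[F]_5) (x : vec) := X *m x^T = 0.

Lemma bilDl x1 x2 N y : bil (x1 + x2) N y = bil x1 N y + bil x2 N y.
Proof. by rewrite /bil !mulmxDl mxE. Qed.
Lemma bilZl s x N y : bil (s *: x) N y = s * bil x N y.
Proof. by rewrite /bil -!scalemxAl mxE. Qed.
Lemma bilDr x N y1 y2 : bil x N (y1 + y2) = bil x N y1 + bil x N y2.
Proof. by rewrite /bil linearD /= mulmxDr mxE. Qed.
Lemma bilZr s x N y : bil x N (s *: y) = s * bil x N y.
Proof. by rewrite /bil linearZ /= -scalemxAr mxE. Qed.
Lemma bilDm x N1 N2 y : bil x (N1 + N2) y = bil x N1 y + bil x N2 y.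
Proof. by rewrite /bil mulmxDr mulmxDl mxE. Qed.
Lemma bilZm x s N y : bil x (s *: N) y = s * bil x N y.
Proof. by rewrite /bil -scalemxAr -scalemxAl mxE. Qed.
Lemma bil0m x y : bil x 0 y = 0.
Proof. by rewrite /bil mulmx0 mul0mx mxE. Qed.
Lemma bilSm x I r (P : pred I) (N : I -> 'M[F]_5) y :
  bil x (\sum_(k <- r | P k) N k) y = \sum_(k <- r | P k) bil x (N k) y.
Proof.
elim/big_rec2: _ => [|k s M _ <-]; first by rewrite bil0m.
by rewrite bilDm.
Qed.

Lemma bil_e N i j : bil (ev i) N (ev j) = N i j.
Proof. by rewrite /bil /ev -rowE trmx_delta -colE !mxE. Qed.

Lemma alt_tr (N : 'M[F]_5) : alternating N -> N^T = - N.
Proof. by move=> [aN _]; apply/matrixP => i j; rewrite !mxE aN. Qed.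

Lemma bil_anti N x y : alternating N -> bil y N x = - bil x N y.
Proof.
move=> aN; have h : forall A : 'M[F]_1, A 0 0 = A^T 0 0 by move=> A; rewrite mxE.
rewrite /bil [LHS]h !trmx_mul trmxK alt_tr //.
by rewrite mulNmx mulmxN mulmxA mxE.
Qed.

Lemma bil_self N x : alternating N -> bil x N x = 0.
Proof. by move=> aN; apply: two_eq0; rewrite {1}bil_anti // addNr. Qed.

Lemma bil_kerr X x y : inker X y -> bil x X y = 0.
Proof. by rewrite /bil /inker -mulmxA => ->; rewrite mulmx0 mxE. Qed.

Lemma bil_kerl X x y : alternating X -> inker X x -> bil x X y = 0.
Proof. by move=> aX Hx; rewrite bil_anti // bil_kerr // oppr0. Qed.

Lemma inkerD X x y : inker X x -> inker X y -> inker X (x + y).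
Proof. by rewrite /inker linearD /= mulmxDr => -> ->; rewrite addr0. Qed.
Lemma inkerZ X s x : inker X x -> inker X (s *: x).
Proof. by rewrite /inker linearZ /= -scalemxAr => ->; rewrite scaler0. Qed.

Definition wv (X : 'M[F]_5) (a b c : 'I_5) : vec :=
  X a b *: ev c + X b c *: ev a + X c a *: ev b.

Lemma bil3 s1 s2 s3 i1 i2 i3 N t1 t2 t3 j1 j2 j3 :
  bil (s1 *: ev i1 + s2 *: ev i2 + s3 *: ev i3) N
      (t1 *: ev j1 + t2 *: ev j2 + t3 *: ev j3) =
  s1 * (t1 * N i1 j1 + t2 * N i1 j2 + t3 * N i1 j3) +
  s2 * (t1 * N i2 j1 + t2 * N i2 j2 + t3 * N i2 j3) +
  s3 * (t1 * N i3 j1 + t2 * N i3 j2 + t3 * N i3 j3).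
Proof. by rewrite !(bilDl, bilZl, bilDr, bilZr, bil_e). Qed.

Lemma wv_pair X N a b c d : alternating X -> alternating N ->
  bil (wv X a b c) N (wv X a b d) = X a b * DO X N a b c d - N a b * P4 X a b c d.
Proof.
move=> [aX dX] [aN dN]; rewrite /wv bil3 /DO /P4.
rewrite (aN c a) (aN c b) (aN b a) !dN (aX d a) (aX c a); ring.
Qed.

Lemma wv_ker X a b c : alternating X -> (forall i, subpf X i = 0) ->
  [&& a != b, a != c & b != c] -> inker X (wv X a b c).
Proof.
move=> aX H /and3P [hab hac hbc].
have [aX' dX] := aX.
rewrite /inker /wv !linearD !linearZ /=.
rewrite /ev !trmx_delta -!colE; apply/matrixP => i j; rewrite !mxE.
case: (eqVneq i a) => [->|hia]; first by rewrite dX (aX' c a); ring.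
case: (eqVneq i b) => [->|hib]; first by rewrite dX (aX' b a); ring.
case: (eqVneq i c) => [->|hic]; first by rewrite dX (aX' c b); ring.
have := P4_zero aX H (a := a) (b := b) (c := c) (d := i).
rewrite hab hac hbc eq_sym hia eq_sym hib eq_sym hic /= => /(_ isT).
rewrite /P4 (aX' i c) (aX' i a) (aX' c a) (aX' i b) => h.
by rewrite -oppr0 -h; ring.
Qed.
End Bil.

Section Triple.
Variable F : numFieldType.
Local Notation vec := 'rV[F]_5.

Lemma kernel_triple (X : 'M[F]_5) : alternating X -> (forall i, subpf X i = 0) ->
  X != 0 ->
  exists w1 w2 w3 : vec,
  [/\ inker X w1, inker X w2, inker X w3,
      (forall a1 a2 a3 : F, a1 *: w1 + a2 *: w2 + a3 *: w3 = 0 ->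
          [/\ a1 = 0, a2 = 0 & a3 = 0]) &
      (forall N, alternating N -> (forall i, Dsub X N i = 0) ->
         [/\ bil w2 N w3 = 0, bil w3 N w1 = 0 & bil w1 N w2 = 0])].
Proof.
move=> aX H Xn0.
have [a [b Hab]] : exists a b, X a b != 0.
  case: (boolP [exists a, exists b, X a b != 0]) => [/existsP[a /existsP[b h]]|hn].
    by exists a, b.
  case/negP: Xn0; apply/eqP/matrixP => i j; rewrite mxE.
  by apply: contraNeq hn => h; apply/existsP; exists i; apply/existsP; exists j.
have [aX' dX] := aX.
have ab : a != b by apply: contraNneq Hab => ->; rewrite dX.
have [c [d [e]]] := compl3 ab.
move=> /andP[ca /andP[cb /andP[da /andP[db /andP[ea /andP[eb /and3P [cd ce de]]]]]]].
have ac : a != c by rewrite eq_sym. have bc : b != c by rewrite eq_sym.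
have ad : a != d by rewrite eq_sym. have bd : b != d by rewrite eq_sym.
have ae : a != e by rewrite eq_sym. have be : b != e by rewrite eq_sym.
have dc : d != c by rewrite eq_sym. have ec : e != c by rewrite eq_sym.
have ed : e != d by rewrite eq_sym.
exists (wv X a b c), (wv X a b d), (wv X a b e); split.
- by apply: wv_ker => //; rewrite ab ac bc.
- by apply: wv_ker => //; rewrite ab ad bd.
- by apply: wv_ker => //; rewrite ab ae be.
- move=> a1 a2 a3 h.
  have hc := congr1 (fun M : vec => M 0 c) h.
  have hd := congr1 (fun M : vec => M 0 d) h.
  have he := congr1 (fun M : vec => M 0 e) h.
  move: hc hd he; rewrite /wv /ev !mxE /= !eqxx.
  rewrite !(negbTE ca, negbTE cb, negbTE da, negbTE db, negbTE ea, negbTE eb,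
            negbTE cd, negbTE ce, negbTE de, negbTE dc, negbTE ec, negbTE ed) /=.
  move=> hc hd he.
  have z : forall t : F, t * X a b = 0 -> t = 0.
    by move=> t /eqP; rewrite mulf_eq0 (negbTE Hab) orbF => /eqP.
  split; apply: z.
  + by rewrite -hc; ring.
  + by rewrite -hd; ring.
  + by rewrite -he; ring.
- move=> N aN HN.
  have HD := DO_zero aX aN HN. have HP := P4_zero aX H.
  rewrite !wv_pair // !HD ?HP ?mulr0 ?subrr //;
  by rewrite ?ab ?ac ?ad ?ae ?bc ?bd ?be ?cd ?ce ?de ?dc ?ec ?ed.
Qed.
End Triple.

Section Lin.
Variable F : numFieldType.
Local Notation vec := 'rV[F]_5.

Lemma rank_step (L : 'M[F]_(5,3)) (T : 'M[F]_(3,5)) :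
  row_free T -> T *m L = 0 -> exists lam : 'cV[F]_3, lam != 0 /\ L *m lam = 0.
Proof.
move=> fT TL.
have h1 : (3 <= 5 - \rank L)%N.
  by have := mxrankS (introT sub_kermxP TL); rewrite mxrank_ker (eqP fT).
have h2 : (\rank L <= 2)%N by move: h1 (rank_leq_col L); lia.
set K := kermx L^T.
have KL : K *m L^T = 0 by apply/sub_kermxP.
have Kn0 : K != 0.
  by rewrite -mxrank_eq0 mxrank_ker mxrank_tr; move: h2; lia.
have [i Hi] : exists i, row i K != 0.
  case: (boolP [exists i, row i K != 0]) => [/existsP[i h]|hn]; first by exists i.
  case/negP: Kn0; apply/eqP/row_matrixP => i; rewrite row0.
  by apply: contraNeq hn => h; apply/existsP; exists i.
exists (row i K)^T; split; first by rewrite trmx_eq0.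
have : row i (K *m L^T) = 0 by rewrite KL row0.
by rewrite row_mul => /(congr1 trmx); rewrite trmx_mul trmxK trmx0.
Qed.

Definition indep2 (x y : vec) := forall s t : F, s *: x + t *: y = 0 -> s = 0 /\ t = 0.

Definition goodpair (X : 'M[F]_5) (P : 'M[F]_5 -> Prop) (x y : vec) :=
  [/\ inker X x, inker X y, indep2 x y & forall N, P N -> bil x N y = 0].

Lemma lam_pair0 (X : 'M[F]_5) (P : 'M[F]_5 -> Prop) (w1 w2 w3 : vec) (l0 l1 l2 : F) :
  (forall N, P N -> alternating N) ->
  inker X w1 -> inker X w2 -> inker X w3 ->
  (forall a1 a2 a3 : F, a1 *: w1 + a2 *: w2 + a3 *: w3 = 0 ->
          [/\ a1 = 0, a2 = 0 & a3 = 0]) ->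
  (forall N, P N -> l0 * bil w2 N w3 + l1 * bil w3 N w1 + l2 * bil w1 N w2 = 0) ->
  l0 != 0 -> exists x y, goodpair X P x y.
Proof.
move=> Palt k1 k2 k3 ind rel l0n.
exists (l1 *: w1 + (- l0) *: w2), (l2 *: w1 + (- l0) *: w3); split.
- by apply: inkerD; apply: inkerZ.
- by apply: inkerD; apply: inkerZ.
- move=> s t h.
  have := ind (s * l1 + t * l2) (- (s * l0)) (- (t * l0)).
  case.
    rewrite -h !scalerDr !scalerA !scalerDl.
    by rewrite !(mulrN, mulNr) -!addrA; congr (_ + _); rewrite addrCA.
  move=> _ /eqP; rewrite oppr_eq0 mulf_eq0 (negbTE l0n) orbF => /eqP ->.
  by move/eqP; rewrite oppr_eq0 mulf_eq0 (negbTE l0n) orbF => /eqP ->.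
- move=> N PN; have aN := Palt N PN.
  rewrite !(bilDl, bilDr, bilZl, bilZr) !bil_self //.
  rewrite (bil_anti w3 w1 aN) (bil_anti w1 w2 aN).
  have := rel N PN.
  move=> h; transitivity (l0 * (l0 * bil w2 N w3 + l1 * bil w3 N w1 + l2 * bil w1 N w2)); first ring.
  by rewrite h mulr0.
Qed.

End Lin.

Section Ech.
Variable F : numFieldType.
Local Notation vec := 'rV[F]_5.

Lemma lam_pair (X : 'M[F]_5) (P : 'M[F]_5 -> Prop) (w1 w2 w3 : vec) (l0 l1 l2 : F) :
  (forall N, P N -> alternating N) ->
  inker X w1 -> inker X w2 -> inker X w3 ->
  (forall a1 a2 a3 : F, a1 *: w1 + a2 *: w2 + a3 *: w3 = 0 ->
          [/\ a1 = 0, a2 = 0 & a3 = 0]) ->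
  (forall N, P N -> l0 * bil w2 N w3 + l1 * bil w3 N w1 + l2 * bil w1 N w2 = 0) ->
  [|| l0 != 0, l1 != 0 | l2 != 0] -> exists x y, goodpair X P x y.
Proof.
move=> Palt k1 k2 k3 ind rel /or3P [h|h|h].
- exact: (lam_pair0 Palt k1 k2 k3 ind rel h).
- apply: (lam_pair0 (w1 := w2) (w2 := w3) (w3 := w1) (l0 := l1) (l1 := l2) (l2 := l0)) => //.
  + move=> a1 a2 a3 e; have [] := ind a3 a1 a2; last by move=> -> -> ->.
    by rewrite -e [RHS]addrC addrA.
  + by move=> N PN; rewrite -(rel N PN); ring.
- apply: (lam_pair0 (w1 := w3) (w2 := w1) (w3 := w2) (l0 := l2) (l1 := l0) (l2 := l1)) => //.
  + move=> a1 a2 a3 e; have [] := ind a2 a3 a1; last by move=> -> -> ->.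
    by rewrite -e -[RHS]addrA [RHS]addrC.
  + by move=> N PN; rewrite -(rel N PN); ring.
Qed.

Lemma argmax5 (Q : pred 'I_5) i0 : Q i0 ->
  exists I, Q I /\ forall k : 'I_5, (I < k)%N -> ~~ Q k.
Proof.
move=> Hi0; case: (arg_maxnP val Hi0) => I QI Hmax.
exists I; split => // k Hk; apply/negP => Qk; have := Hmax k Qk; by rewrite /= leqNgt Hk.
Qed.

Lemma goodpair_sym (X : 'M[F]_5) (P : 'M[F]_5 -> Prop) (x y : vec) : (forall N, P N -> alternating N) ->
  goodpair X P x y -> goodpair X P y x.
Proof.
move=> Palt [kx ky ind hb]; split => //.
- by move=> s t e; have [] := ind t s; [rewrite addrC | move=> -> ->].
- by move=> N PN; rewrite bil_anti ?hb ?oppr0 //; apply: Palt.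
Qed.

Definition echelon_out (X : 'M[F]_5) (P : 'M[F]_5 -> Prop) :=
  exists (I J : 'I_5) (x' y' : vec), [/\ (I < J)%N, x' 0 I = 1,
    (forall k : 'I_5, (I < k)%N -> x' 0 k = 0), y' 0 J = 1 &
    [/\ (forall k : 'I_5, (J < k)%N -> y' 0 k = 0), inker X x', inker X y' &
        forall N, P N -> bil x' N y' = 0]].

Lemma echelon1 (X : 'M[F]_5) (P : 'M[F]_5 -> Prop) (x y : vec) (J : 'I_5) : (forall N, P N -> alternating N) ->
  goodpair X P x y -> y 0 J != 0 ->
  (forall k : 'I_5, (J < k)%N -> x 0 k = 0 /\ y 0 k = 0) -> echelon_out X P.
Proof.
move=> Palt [kx ky ind hb] yJ hJ.
set y' := (y 0 J)^-1 *: y.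
set z := x + (- x 0 J) *: y'.
have zJ : forall k : 'I_5, (J <= k)%N -> z 0 k = 0.
  move=> k; rewrite leq_eqVlt => /orP [/eqP/val_inj <-|Hk].
    by rewrite /z /y' !mxE mulVf // mulr1 addrN.
  by rewrite /z /y' !mxE; have [-> ->] := hJ k Hk; rewrite !mulr0 addr0.
have zn0 : exists i, z 0 i != 0.
  case: (boolP [exists i, z 0 i != 0]) => [/existsP[i h]|hn]; first by exists i.
  have : 1 *: x + (- x 0 J * (y 0 J)^-1) *: y = 0.
    apply/matrixP => a b; rewrite (ord1 a) !mxE mul1r.
    apply/eqP; case: eqP => // /eqP hne; case/negP: hn; apply/existsP; exists b.
    by move: hne; rewrite /z /y' !mxE mulrA.
  by case/ind => /eqP; rewrite oner_eq0.
have [i0 hi0] := zn0.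
have [I [zI Imax]] := argmax5 (Q := fun i => z 0 i != 0) hi0.
have IJ : (I < J)%N.
  rewrite ltnNge; apply/negP => h; by rewrite zJ ?eqxx in zI.
exists I, J, ((z 0 I)^-1 *: z), y'; split => //.
- by rewrite mxE mulVf.
- by move=> k Hk; rewrite mxE (eqP (negbNE (Imax k Hk))) mulr0.
- by rewrite /y' mxE mulVf.
split.
- by move=> k Hk; rewrite /y' mxE; have [_ ->] := hJ k Hk; rewrite mulr0.
- by apply: inkerZ; apply: inkerD => //; apply: inkerZ; apply: inkerZ.
- by apply: inkerZ.
- move=> N PN; have aN := Palt N PN; rewrite /z /y' !(bilDl, bilZl, bilZr) bil_self // hb //.
  by rewrite !mulr0 addr0 mulr0.
Qed.

Lemma echelon (X : 'M[F]_5) (P : 'M[F]_5 -> Prop) (x y : vec) : (forall N, P N -> alternating N) ->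
  goodpair X P x y -> echelon_out X P.
Proof.
move=> Palt gp.
have [kx ky ind hb] := gp.
have [i0 hi0] : exists i, (x 0 i != 0) || (y 0 i != 0).
  case: (boolP [exists i, (x 0 i != 0) || (y 0 i != 0)]) => [/existsP[i h]|hn].
    by exists i.
  have : 1 *: x + 0 *: y = 0.
    rewrite scale1r scale0r addr0; apply/matrixP => a b; rewrite (ord1 a) mxE.
    apply/eqP; case: eqP => // /eqP hne; case/negP: hn; apply/existsP; exists b; by rewrite hne.
  by case/ind => /eqP; rewrite oner_eq0.
have [J [QJ Jmax]] := argmax5 (Q := fun i => (x 0 i != 0) || (y 0 i != 0)) hi0.
have hJ : forall k : 'I_5, (J < k)%N -> x 0 k = 0 /\ y 0 k = 0.
  move=> k Hk; have := Jmax k Hk; rewrite negb_or !negbK => /andP [/eqP -> /eqP ->].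
  by [].
case: (eqVneq (y 0 J) 0) => [y0|yJ].
- move: QJ; rewrite y0 eqxx orbF => xJ.
  apply: (echelon1 (x := y) (y := x) Palt (goodpair_sym Palt gp) xJ).
  by move=> k Hk; have [-> ->] := hJ k Hk.
- exact: (echelon1 Palt gp yJ hJ).
Qed.
End Ech.

Section Main.
Variable F : numFieldType.
Local Notation vec := 'rV[F]_5.

Lemma argmaxn n (Q : pred 'I_n) i0 : Q i0 ->
  exists I, Q I /\ forall k : 'I_n, (I < k)%N -> ~~ Q k.
Proof.
move=> Hi0; case: (arg_maxnP val Hi0) => I QI Hmax.
exists I; split => // k Hk; apply/negP => Qk; have := Hmax k Qk; by rewrite /= leqNgt Hk.
Qed.

Lemma alt0 : alternating (0 : 'M[F]_5).
Proof. by split => [i j|i]; rewrite !mxE ?oppr0. Qed.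
Lemma altD (X Y : 'M[F]_5) : alternating X -> alternating Y -> alternating (X + Y).
Proof. by move=> [aX dX] [aY dY]; split => [i j|i]; rewrite !mxE; [rewrite aX aY opprD | rewrite dX dY addr0]. Qed.
Lemma altZ s (X : 'M[F]_5) : alternating X -> alternating (s *: X).
Proof. by move=> [aX dX]; split => [i j|i]; rewrite !mxE; [rewrite aX mulrN | rewrite dX mulr0]. Qed.
Lemma altS I r (P : pred I) (X : I -> 'M[F]_5) :
  (forall k, alternating (X k)) -> alternating (\sum_(k <- r | P k) X k).
Proof. by move=> H; elim/big_rec: _ => [|k s _ h]; [apply: alt0 | apply: altD]. Qed.

Lemma entry_bil (G S : 'M[F]_5) i j : (G *m S *m G^T) i j = bil (row i G) S (row j G).
Proof.
rewrite /bil tr_row colE !mulmxA -!row_mul -colE.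
by rewrite !mxE.
Qed.

Theorem main_gen (A0 A1 : quad F) (p : 'I_4 -> F) :
  alternating_quad A0 A1 ->
  on_special_fiber A0 p ->
  tangent_dim_ge2 A0 A1 p ->
  exists (g4 : 'M[F]_4) (g5 : 'M[F]_5),
    lower_unipotent g4 /\ lower_unipotent g5 /\
    ((exists K : 'I_4, normal_form_K (act g4 g5 A0) (act g4 g5 A1) K) \/
     (exists (I J : 'I_5) (K : 'I_4), (I < J)%N /\
        normal_form_IJK (act g4 g5 A0) (act g4 g5 A1) I J K)).
Proof.
move=> halt [[k0 pk0] Hpf] [c1 [c2 [v1 [v2 [T1 [T2 ind]]]]]].
have [K [pK Kmax]] := argmaxn (Q := fun k => p k != 0) pk0.
set g4 : 'M[F]_4 := \matrix_(k, l) if k == K then p l / p K else (k == l)%:R.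
have lu4 : lower_unipotent g4.
  split.
  - move=> k l kl; rewrite mxE; case: eqP => [ek|_].
      by rewrite (eqP (negbNE (Kmax l _))) ?mul0r // -ek.
    have : k != l by apply: contraTneq kl => ->; rewrite ltnn.
    by move/negbTE => ->.
  - by move=> k; rewrite mxE; case: eqP => [->|_]; [rewrite mulfV | rewrite eqxx].
have alt0k : forall k, alternating (A0 k) by move=> k; case: (halt k).
have alt1k : forall k, alternating (A1 k) by move=> k; case: (halt k).
have aM0 : alternating (M0 A0 p) by apply: altS => k; apply: altZ.
have aM1 : alternating (M1 A1 p) by apply: altS => k; apply: altZ.
have SK0 : \sum_l g4 K l *: A0 l = (p K)^-1 *: M0 A0 p.
  by rewrite /M0 scaler_sumr; apply: eq_bigr => l _; rewrite mxE eqxx scalerA mulrC.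
have SK1 : \sum_l g4 K l *: A1 l = (p K)^-1 *: M1 A1 p.
  by rewrite /M1 scaler_sumr; apply: eq_bigr => l _; rewrite mxE eqxx scalerA mulrC.
case: (eqVneq (M0 A0 p) 0) => [M00|M0n0].
  exists g4, 1; split => //; split.
    by split => [i j ij|i]; rewrite mxE ?eqxx //; move: ij; case: eqP => // ->; rewrite ltnn.
  by left; exists K => i j; rewrite /act SK0 M00 scaler0 mul1mx mul0mx mxE.
have [w1 [w2 [w3 [k1 k2 k3 indw pair]]]] := kernel_triple aM0 Hpf M0n0.
pose P := fun N : 'M[F]_5 => N = M1 A1 p \/ exists k, N = A0 k.
have Palt : forall N, P N -> alternating N by move=> N [->|[k ->]].
pose u1 := fun r : 'I_3 => if val r == 0%N then w2 else if val r == 1%N then w3 else w1.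
pose u2 := fun r : 'I_3 => if val r == 0%N then w3 else if val r == 1%N then w1 else w2.
pose Ns := fun j : 'I_5 => if val j == 0%N then M1 A1 p else A0 (inord (val j).-1).
pose tv := fun (c : F) (v : 'I_4 -> F) (j : 'I_5) =>
  if val j == 0%N then c else v (inord (val j).-1).
have liftE : forall k : 'I_4, inord (val (lift ord0 k)).-1 = k.
  by move=> k; rewrite /= add0n inord_val.
have NsE : forall c v, \sum_j tv c v j *: Ns j = Nt A0 A1 p c v.
  move=> c v; rewrite big_ord_recl /tv /Ns /= /Nt; congr (_ + _).
  by apply: eq_bigr => k _; rewrite liftE.
have phiN : forall c v r,
    \sum_j tv c v j * bil (u1 r) (Ns j) (u2 r) = bil (u1 r) (Nt A0 A1 p c v) (u2 r).
  by move=> c v r; rewrite -NsE bilSm; apply: eq_bigr => j _; rewrite bilZm.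
have altNt : forall c v, alternating (Nt A0 A1 p c v).
  by move=> c v; apply: altD; [apply: altZ | apply: altS => k; apply: altZ].
have phi0 : forall c v, tangent_vec A0 A1 p c v ->
    forall r, bil (u1 r) (Nt A0 A1 p c v) (u2 r) = 0.
  move=> c v Tv r; have [h1 h2 h3] := pair _ (altNt c v) (tangent_Dsub Hpf Tv).
  by rewrite /u1 /u2; case: r => [[|[|[|r]]] hr] //=.
have phiM0 : forall r, bil (u1 r) (M0 A0 p) (u2 r) = 0.
  by move=> r; apply: bil_kerr; rewrite /u2; case: r => [[|[|[|r]]] hr] //=.
have Nt0 : Nt A0 A1 p 0 p = M0 A0 p by rewrite /Nt scale0r add0r.
pose L : 'M[F]_(5,3) := \matrix_(j, r) bil (u1 r) (Ns j) (u2 r).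
pose T : 'M[F]_(3,5) := \matrix_(s, j) (if val s == 0%N then tv 0 p j
   else if val s == 1%N then tv c1 v1 j else tv c2 v2 j).
have TL : T *m L = 0.
  apply/matrixP => s r; rewrite !mxE.
  under eq_bigr do rewrite !mxE.
  case: s => [[|[|[|s]]] hs] //=.
  - by rewrite phiN Nt0 phiM0.
  - by rewrite phiN phi0.
  - by rewrite phiN phi0.
have fT : row_free T.
  apply: inj_row_free => x hx.
  have h := fun j => congr1 (fun M : 'rV[F]_5 => M 0 j) hx.
  have h0 := h ord0.
  have hk : forall k : 'I_4, x 0 ord0 * p k + x 0 (lift ord0 ord0) * v1 k
       + x 0 (lift ord0 (lift ord0 ord0)) * v2 k = 0.
    move=> k; have := h (lift ord0 k).
    rewrite !mxE !big_ord_recl big_ord0 !mxE /= /tv /= liftE.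
    by rewrite addr0 addrA.
  move: h0; rewrite !mxE !big_ord_recl big_ord0 !mxE /= /tv /=.
  rewrite addr0 addrA => h0.
  have [e0 e1 e2] := ind _ _ _ h0 hk.
  apply/rowP => s; rewrite mxE; case: s => [[|[|[|s]]] hs] //=.
  - by rewrite -e0; congr (x 0 _); apply: val_inj.
  - by rewrite -e1; congr (x 0 _); apply: val_inj.
  - by rewrite -e2; congr (x 0 _); apply: val_inj.
have [lam [lamn0 Llam]] := rank_step fT TL.
pose l0 := lam ord0 0.
pose l1 := lam (lift ord0 ord0) 0.
pose l2 := lam (lift ord0 (lift ord0 ord0)) 0.
have rel : forall N, P N -> l0 * bil w2 N w3 + l1 * bil w3 N w1 + l2 * bil w1 N w2 = 0.
  have hL := fun j => congr1 (fun M : 'cV[F]_5 => M j 0) Llam.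
  move=> N [->|[k ->]].
  - move: (hL ord0); rewrite !mxE !big_ord_recl big_ord0 !mxE /= /Ns /u1 /u2 /=.
    by move=> e; rewrite -[RHS]e /l0 /l1 /l2; ring.
  - move: (hL (lift ord0 k)); rewrite !mxE !big_ord_recl big_ord0 !mxE /= /Ns /u1 /u2 /=.
    by rewrite liftE => e; rewrite -[RHS]e /l0 /l1 /l2; ring.
have lnz : [|| l0 != 0, l1 != 0 | l2 != 0].
  apply: contraNT lamn0; rewrite !negb_or !negbK => /and3P [/eqP h0 /eqP h1 /eqP h2].
  apply/eqP/matrixP => s t; rewrite (ord1 t) mxE; case: s => [[|[|[|s]]] hs] //=.
  - by rewrite -h0 /l0; congr (lam _ 0); apply: val_inj.
  - by rewrite -h1 /l1; congr (lam _ 0); apply: val_inj.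
  - by rewrite -h2 /l2; congr (lam _ 0); apply: val_inj.
have [x [y gp]] := lam_pair Palt k1 k2 k3 indw rel lnz.
have [I [J [x' [y' [IJ xI xgt yJ [ygt kx ky bz]]]]]] := echelon Palt gp.
pose g5 : 'M[F]_5 := \matrix_(i, j) if i == I then x' 0 j
   else if i == J then y' 0 j else (i == j)%:R.
have JI : J != I by apply: contraTneq IJ => ->; rewrite ltnn.
have rI : row I g5 = x' by apply/rowP => j; rewrite !mxE eqxx.
have rJ : row J g5 = y' by apply/rowP => j; rewrite !mxE (negbTE JI) eqxx.
exists g4, g5; split => //; split.
  split => [i j ij|i]; rewrite mxE.
    case: eqP => [ei|_]; first by rewrite xgt // -ei.
    case: eqP => [ei|_]; first by rewrite ygt // -ei.
    have : i != j by apply: contraTneq ij => ->; rewrite ltnn.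
    by move/negbTE => ->.
  case: eqP => [->|_]; first exact: xI.
  case: eqP => [->|_]; first exact: yJ.
  by rewrite eqxx.
have PA0 : forall l, P (A0 l) by move=> l; right; exists l.
have PM1 : P (M1 A1 p) by left.
have c1' : forall k, act g4 g5 A0 k I J = 0.
  move=> k; rewrite /act entry_bil rI rJ bilSm big1 // => l _.
  by rewrite bilZm bz ?mulr0.
right; exists I, J, K; split => //; split => //.
- by move=> j; rewrite /act entry_bil rI SK0 bilZm bil_kerl ?mulr0.
- by move=> i; rewrite /act entry_bil rJ SK0 bilZm bil_kerr ?mulr0.
- split; first exact: c1'.
  by rewrite /act entry_bil rI rJ SK1 bilZm bz ?mulr0.
Qed.
End Main.


Unset Implicit Arguments.
Theorem lemma4p6 (R : realType) (A0 A1 : quad R[i]) (p : 'I_4 -> R[i]) :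
  alternating_quad A0 A1 ->
  on_special_fiber A0 p ->
  tangent_dim_ge2 A0 A1 p ->
  exists (g4 : 'M[R[i]]_4) (g5 : 'M[R[i]]_5),
    lower_unipotent g4 /\ lower_unipotent g5 /\
    ((exists K : 'I_4, normal_form_K (act g4 g5 A0) (act g4 g5 A1) K) \/
     (exists (I J : 'I_5) (K : 'I_4), (I < J)%N /\
        normal_form_IJK (act g4 g5 A0) (act g4 g5 A1) I J K)).
Proof. exact: main_gen. Qed.
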